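(* Let $\alpha\in(0,1)$ be irrational. Then: (a) For all $1\le t<q_n$ we have $s_{nt}=s_{n(q_n-t)}$, $h_{nt}=h_{n(q_n-t)}$ and $\xi_{nt}=-\xi_{n(q_n-t)}$. (b) If $n$ is sufficiently large, then $s_{nt}>s_{n0}$ for all $1\le t<q_n$.
   Context: $\alpha=[0;a_1,a_2,\ldots]$, with $q_0=0$, $q_1=1$, $q_{n+1}=a_nq_n+q_{n-1}$ and $p_0=1$, $p_1=0$, $p_{n+1}=a_np_n+p_{n-1}$. $\Lambda_n=q_n\alpha-p_n$. For $t\in\{0,\ldots,q_n-1\}$ define: - $\xi_{nt}=\{tq_{n-1}/q_n\}-\frac12$; - $s_{nt}=2\sin\big(\pi[t/q_n-|\Lambda_n|\xi_{nt}]\big)$; - $h_{nt}=\cot(\pi t/q_n)\sin(\pi|\Lambda_n|\xi_{nt})$. *)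

(* Defs.v *)
From Stdlib Require Import Reals Lra Lia ZArith.
Open Scope R_scope.

(* Gauss map iterates: cf_x alpha 0 = alpha = x_1, x_{k+1} = 1/x_k - floor(1/x_k). *)
Fixpoint cf_x (alpha : R) (k : nat) : R :=
  match k with
  | O => alpha
  | S j => let y := / cf_x alpha j in y - IZR (Int_part y)
  end.

(* Partial quotients: alpha = [0; a_1, a_2, ...], a_n = floor(1 / x_n), n >= 1.
   (Int_part is the floor function.)  The value at n = 0 is never used. *)
Definition cf_a (alpha : R) (n : nat) : nat :=
  Z.to_nat (Int_part (/ cf_x alpha (n - 1))).

Fixpoint cf_q (alpha : R) (n : nat) : nat :=
  match n with
  | O => 0%nat
  | S m => match m with
           | O => 1%nat
           | S k => (cf_a alpha m * cf_q alpha m + cf_q alpha k)%nat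
           end
  end.

Fixpoint cf_p (alpha : R) (n : nat) : nat :=
  match n with
  | O => 1%nat
  | S m => match m with
           | O => 0%nat
           | S k => (cf_a alpha m * cf_p alpha m + cf_p alpha k)%nat
           end
  end.

Definition Lambda (alpha : R) (n : nat) : R :=
  INR (cf_q alpha n) * alpha - INR (cf_p alpha n).

Definition frac_part (x : R) : R := x - IZR (Int_part x).

Definition cot (x : R) : R := cos x / sin x.

Definition xi (alpha : R) (n t : nat) : R :=
  frac_part (INR t * INR (cf_q alpha (n - 1)) / INR (cf_q alpha n)) - / 2.

Definition s_nt (alpha : R) (n t : nat) : R :=
  2 * sin (PI * (INR t / INR (cf_q alpha n) - Rabs (Lambda alpha n) * xi alpha n t)).

Definition h_nt (alpha : R) (n t : nat) : R :=
  cot (PI * INR t / INR (cf_q alpha n)) * sin (PI * Rabs (Lambda alpha n) * xi alpha n t).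

Definition irrational (x : R) : Prop :=
  ~ exists (p q : Z), q <> 0%Z /\ x = IZR p / IZR q.

(* Main.v *)
Require Import Defs.
From Stdlib Require Import Reals Lra Lia ZArith Znumtheory.
Open Scope R_scope.

Lemma Int_part_char (y : R) (k : Z) : IZR k <= y -> y < IZR k + 1 -> Int_part y = k.
Proof.
  intros H1 H2. unfold Int_part.
  assert (E : (k + 1)%Z = up y).
  { apply tech_up; rewrite plus_IZR; simpl; lra. }
  rewrite <- E. lia.
Qed.

Lemma Int_div (a b : Z) : (0 < b)%Z -> Int_part (IZR a / IZR b) = (a / b)%Z.
Proof.
  intros Hb. pose proof (Z.div_mod a b ltac:(lia)) as Ha.
  pose proof (Z.mod_pos_bound a b Hb) as Hr.
  set (d := (a / b)%Z) in *. set (r := (a mod b)%Z) in *.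
  assert (Hb' : 0 < IZR b) by (apply IZR_lt; lia).
  assert (E : IZR a / IZR b = IZR d + IZR r / IZR b).
  { rewrite Ha, plus_IZR, mult_IZR. field. lra. }
  assert (0 <= IZR r) by (apply IZR_le; lia).
  assert (IZR r < IZR b) by (apply IZR_lt; lia).
  apply Int_part_char; rewrite E.
  - assert (0 <= IZR r / IZR b) by (apply Rmult_le_pos; [lra | left; apply Rinv_0_lt_compat; lra]). lra.
  - assert (IZR r / IZR b < 1) by (apply (Rmult_lt_reg_r (IZR b)); [lra|]; unfold Rdiv; rewrite Rmult_assoc, Rinv_l; lra). lra.
Qed.

Lemma frac_div (a b : Z) : (0 < b)%Z -> frac_part (IZR a / IZR b) = IZR (a mod b) / IZR b.
Proof.
  intros Hb. unfold frac_part. rewrite Int_div by lia.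
  pose proof (Z.div_mod a b ltac:(lia)) as Ha.
  assert (Hb' : 0 < IZR b) by (apply IZR_lt; lia).
  rewrite Ha at 1. rewrite plus_IZR, mult_IZR. field. lra.
Qed.


Lemma cf_x_bounds (alpha : R) (Hpos : 0 < alpha) (Hlt1 : alpha < 1) (Hirr : irrational alpha) k : 0 < cf_x alpha k < 1 /\ irrational (cf_x alpha k).
Proof.
  induction k as [|k [[H0 H1] Hi]]; [simpl; tauto|].
  simpl. set (x := cf_x alpha k) in *. set (y := / x).
  assert (Hy : 1 < y) by (unfold y; rewrite <- Rinv_1; apply Rinv_lt_contravar; lra).
  set (K := Int_part y). destruct (base_Int_part y) as [B1 B2]. fold K in B1, B2.
  assert (Hirr' : irrational (y - IZR K)).
  { intros [p [q [Hq E]]]. apply Hi.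
    assert (Hq' : IZR q <> 0) by (apply not_0_IZR; auto).
    assert (Ey : y = (IZR p + IZR K * IZR q) / IZR q) by (replace y with (IZR p / IZR q + IZR K) by lra; field; auto).
    exists q, (p + K * q)%Z. split.
    - intro Z0. assert (IZR (p + K*q) = 0) by (rewrite Z0; reflexivity).
      rewrite plus_IZR, mult_IZR in H. rewrite H in Ey. unfold Rdiv in Ey. rewrite Rmult_0_l in Ey. lra.
    - rewrite plus_IZR, mult_IZR.
      assert (Hn : IZR p + IZR K * IZR q <> 0).
      { intro Z0. rewrite Z0 in Ey. unfold Rdiv in Ey. rewrite Rmult_0_l in Ey. lra. }
      assert (x = / y) by (unfold y; rewrite Rinv_inv; auto).
      rewrite H, Ey. field. auto. }
  repeat split; auto; try lra.
  destruct (Rle_lt_or_eq_dec 0 (y - IZR K)) as [Hl|He]; [lra|lra|].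
  exfalso. apply Hirr'. exists 0%Z, 1%Z. split; [lia|]. rewrite <- He. simpl. field.
Qed.

Lemma cf_a_INR (alpha : R) (Hpos : 0 < alpha) (Hlt1 : alpha < 1) (Hirr : irrational alpha) m : INR (cf_a alpha (S m)) = IZR (Int_part (/ cf_x alpha m)) /\ (1 <= cf_a alpha (S m))%nat.
Proof.
  unfold cf_a. replace (S m - 1)%nat with m by lia.
  destruct ((cf_x_bounds alpha Hpos Hlt1 Hirr) m) as [[H0 H1] _].
  assert (Hy : 1 < / cf_x alpha m) by (rewrite <- Rinv_1; apply Rinv_lt_contravar; lra).
  destruct (base_Int_part (/ cf_x alpha m)) as [B1 B2].
  assert (HK : (1 <= Int_part (/ cf_x alpha m))%Z).
  { assert (0 < IZR (Int_part (/ cf_x alpha m))) by lra. apply lt_IZR in H. lia. }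
  rewrite INR_IZR_INZ, Z2Nat.id by lia. split; auto. lia.
Qed.

Lemma key (alpha : R) (Hpos : 0 < alpha) (Hlt1 : alpha < 1) (Hirr : irrational alpha) m : INR (cf_a alpha (S m)) * cf_x alpha m = 1 - cf_x alpha m * cf_x alpha (S m).
Proof.
  destruct ((cf_a_INR alpha Hpos Hlt1 Hirr) m) as [E _]. rewrite E. simpl.
  destruct ((cf_x_bounds alpha Hpos Hlt1 Hirr) m) as [[H0 H1] _]. field. lra.
Qed.


Lemma q_rec (alpha : R) (Hpos : 0 < alpha) (Hlt1 : alpha < 1) (Hirr : irrational alpha) n : cf_q alpha (S (S n)) = (cf_a alpha (S n) * cf_q alpha (S n) + cf_q alpha n)%nat.
Proof. reflexivity. Qed.
Lemma p_rec (alpha : R) (Hpos : 0 < alpha) (Hlt1 : alpha < 1) (Hirr : irrational alpha) n : cf_p alpha (S (S n)) = (cf_a alpha (S n) * cf_p alpha (S n) + cf_p alpha n)%nat.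
Proof. reflexivity. Qed.

Lemma lam_rec (alpha : R) (Hpos : 0 < alpha) (Hlt1 : alpha < 1) (Hirr : irrational alpha) n : Lambda alpha (S (S n)) = INR (cf_a alpha (S n)) * Lambda alpha (S n) + Lambda alpha n.
Proof. unfold Lambda. rewrite (q_rec alpha Hpos Hlt1 Hirr), (p_rec alpha Hpos Hlt1 Hirr), !plus_INR, !mult_INR. ring. Qed.

Fixpoint Pr (alpha : R) (n : nat) : R := match n with O => 1 | S k => Pr alpha k * cf_x alpha k end.

Lemma Pr_pos (alpha : R) (Hpos : 0 < alpha) (Hlt1 : alpha < 1) (Hirr : irrational alpha) n : 0 < (Pr alpha) n.
Proof. induction n; simpl; [lra|]. destruct ((cf_x_bounds alpha Hpos Hlt1 Hirr) n) as [[H _] _]. nra. Qed.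

Lemma lam_prod (alpha : R) (Hpos : 0 < alpha) (Hlt1 : alpha < 1) (Hirr : irrational alpha) n : Lambda alpha n = (-1)^(n+1) * (Pr alpha) n /\ Lambda alpha (S n) = (-1)^(S n+1) * (Pr alpha) (S n).
Proof.
  induction n as [|n [IH1 IH2]].
  - unfold Lambda; simpl. split; lra.
  - split; auto. rewrite (lam_rec alpha Hpos Hlt1 Hirr), IH1, IH2.
    pose proof ((key alpha Hpos Hlt1 Hirr) n) as K. simpl Pr. simpl pow.
    replace (n + 1)%nat with (S n) by lia. simpl pow.
    transitivity (- (-1)^n * (Pr alpha) n * (1 - INR (cf_a alpha (S n)) * cf_x alpha n)); [ring|].
    rewrite K. change (/ cf_x alpha n - IZR (Int_part (/ cf_x alpha n))) with (cf_x alpha (S n)). ring.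
Qed.

Lemma detZ (alpha : R) (Hpos : 0 < alpha) (Hlt1 : alpha < 1) (Hirr : irrational alpha) n : (Z.of_nat (cf_q alpha n) * Z.of_nat (cf_p alpha (S n)) - Z.of_nat (cf_q alpha (S n)) * Z.of_nat (cf_p alpha n) = 1
   \/ Z.of_nat (cf_q alpha n) * Z.of_nat (cf_p alpha (S n)) - Z.of_nat (cf_q alpha (S n)) * Z.of_nat (cf_p alpha n) = -1)%Z.
Proof.
  induction n as [|n IH].
  - right. reflexivity.
  - rewrite (q_rec alpha Hpos Hlt1 Hirr), (p_rec alpha Hpos Hlt1 Hirr), !Nat2Z.inj_add, !Nat2Z.inj_mul.
    set (A := Z.of_nat (cf_a alpha (S n))) in *.
    match goal with |- (?E = _ \/ _)%Z => assert (HE : (E = - (Z.of_nat (cf_q alpha n) * Z.of_nat (cf_p alpha (S n)) - Z.of_nat (cf_q alpha (S n)) * Z.of_nat (cf_p alpha n)))%Z) by ring end.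
    rewrite HE. lia.
Qed.

Lemma detR (alpha : R) (Hpos : 0 < alpha) (Hlt1 : alpha < 1) (Hirr : irrational alpha) n : (INR (cf_q alpha n) * INR (cf_p alpha (S n)) - INR (cf_q alpha (S n)) * INR (cf_p alpha n))^2 = 1.
Proof.
  rewrite !INR_IZR_INZ, <- !mult_IZR, <- minus_IZR.
  destruct ((detZ alpha Hpos Hlt1 Hirr) n) as [H|H]; rewrite H; simpl; ring.
Qed.

Lemma sum_id (alpha : R) (Hpos : 0 < alpha) (Hlt1 : alpha < 1) (Hirr : irrational alpha) n : INR (cf_q alpha (S n)) * (Pr alpha) n + INR (cf_q alpha n) * (Pr alpha) (S n) = 1.
Proof.
  destruct ((lam_prod alpha Hpos Hlt1 Hirr) n) as [L1 L2].
  pose proof ((detR alpha Hpos Hlt1 Hirr) n) as D.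
  assert (E : INR (cf_q alpha (S n)) * Lambda alpha n - INR (cf_q alpha n) * Lambda alpha (S n)
     = INR (cf_q alpha n) * INR (cf_p alpha (S n)) - INR (cf_q alpha (S n)) * INR (cf_p alpha n))
    by (unfold Lambda; ring).
  rewrite <- E, L1, L2 in D.
  assert (Hs : ((-1)^(n+1))^2 = 1) by (rewrite <- pow_mult, Nat.mul_comm, pow_mult; replace ((-1)^2) with 1 by ring; apply pow1).
  replace (S n + 1)%nat with (S (n+1)) in D by lia. simpl pow in D.
  assert (Hp : 0 <= INR (cf_q alpha (S n)) * (Pr alpha) n + INR (cf_q alpha n) * (Pr alpha) (S n)).
  { pose proof ((Pr_pos alpha Hpos Hlt1 Hirr) n). pose proof ((Pr_pos alpha Hpos Hlt1 Hirr) (S n)). pose proof (pos_INR (cf_q alpha (S n))). pose proof (pos_INR (cf_q alpha n)). nra. }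
  set (S0 := INR (cf_q alpha (S n)) * (Pr alpha) n + INR (cf_q alpha n) * (Pr alpha) (S n)) in *.
  assert (S0 ^ 2 = 1).
  { rewrite <- D. replace ((-1)^(n+1)) with ((-1)^(n+1)) by reflexivity.
    set (s := (-1)^(n+1)) in *. unfold S0. simpl in Hs. simpl. nra. }
  nra.
Qed.

Lemma q_mono (alpha : R) (Hpos : 0 < alpha) (Hlt1 : alpha < 1) (Hirr : irrational alpha) n : (cf_q alpha n <= cf_q alpha (S n))%nat.
Proof.
  destruct n; [simpl; lia|]. rewrite (q_rec alpha Hpos Hlt1 Hirr). destruct ((cf_a_INR alpha Hpos Hlt1 Hirr) n) as [_ H]. nia.
Qed.

Lemma lam_bound (alpha : R) (Hpos : 0 < alpha) (Hlt1 : alpha < 1) (Hirr : irrational alpha) n : (1 <= cf_q alpha n)%nat -> INR (cf_q alpha n) * Rabs (Lambda alpha n) < 1.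
Proof.
  intros Hq. destruct ((lam_prod alpha Hpos Hlt1 Hirr) n) as [L1 _].
  assert (Rabs (Lambda alpha n) = (Pr alpha) n).
  { rewrite L1, Rabs_mult, pow_1_abs, Rmult_1_l. apply Rabs_right. left; apply (Pr_pos alpha Hpos Hlt1 Hirr). }
  rewrite H. pose proof ((sum_id alpha Hpos Hlt1 Hirr) n). pose proof ((Pr_pos alpha Hpos Hlt1 Hirr) n). pose proof ((Pr_pos alpha Hpos Hlt1 Hirr) (S n)).
  assert (INR (cf_q alpha n) <= INR (cf_q alpha (S n))) by (apply le_INR, (q_mono alpha Hpos Hlt1 Hirr)).
  assert (1 <= INR (cf_q alpha n)) by (apply (le_INR 1); auto).
  nra.
Qed.


Lemma sin_ineq (q t L x : R) : 1 <= t -> t <= q - 1 -> 0 <= L -> q * L < 1 ->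
  -1/2 <= x <= 1/2 -> sin (PI * L / 2) < sin (PI * (t / q - L * x)).
Proof.
  intros Ht1 Ht2 HL HqL [Hx1 Hx2].
  assert (Hq : 0 < q) by lra.
  set (w := 1 / q). set (u := t / q).
  assert (Hw : L < w) by (unfold w; apply (Rmult_lt_reg_l q); [lra|]; field_simplify; lra).
  assert (Hu1 : w <= u) by (unfold u, w; unfold Rdiv; apply Rmult_le_compat_r; [left; apply Rinv_0_lt_compat; lra| lra]).
  assert (Hu2 : u <= 1 - w) by (unfold u, w; apply (Rmult_le_reg_l q); [lra|]; field_simplify; lra).
  assert (HLx1 : L * x <= L / 2) by nra.
  assert (HLx2 : - (L / 2) <= L * x) by nra.
  pose proof PI_RGT_0 as HPI.
  assert (Hw2 : w <= 1/2) by lra.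
  set (a := PI * L / 2). set (th := PI * (u - L * x)).
  assert (Ha0 : 0 <= a) by (unfold a; nra).
  assert (Ha1 : a < PI / 2) by (unfold a; nra).
  assert (H1 : a < th) by (unfold a, th; nra).
  assert (H2 : a < PI - th) by (unfold a, th; nra).
  destruct (Rle_or_lt th (PI/2)) as [Hc|Hc].
  - apply sin_increasing_1; lra.
  - rewrite <- (sin_PI_x th). apply sin_increasing_1; lra.
Qed.

Lemma xi_val alpha m t : (t < cf_q alpha (S m))%nat ->
  xi alpha (S m) t = IZR ((Z.of_nat t * Z.of_nat (cf_q alpha m)) mod Z.of_nat (cf_q alpha (S m))) / INR (cf_q alpha (S m)) - /2.
Proof.
  intros H. unfold xi. replace (S m - 1)%nat with m by lia.
  rewrite !INR_IZR_INZ, <- mult_IZR, frac_div by lia. reflexivity.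
Qed.

Lemma mod_nz (alpha : R) (Hpos : 0 < alpha) (Hlt1 : alpha < 1) (Hirr : irrational alpha) m t : (1 <= t)%nat -> (t < cf_q alpha (S m))%nat ->
  ((Z.of_nat t * Z.of_nat (cf_q alpha m)) mod Z.of_nat (cf_q alpha (S m)) <> 0)%Z.
Proof.
  intros H1 H2 H. apply Z.mod_divide in H; [|lia].
  assert (Hr : rel_prime (Z.of_nat (cf_q alpha (S m))) (Z.of_nat (cf_q alpha m))).
  { apply bezout_rel_prime. destruct (detZ alpha Hpos Hlt1 Hirr m) as [D|D].
    - apply (Bezout_intro _ _ _ (- Z.of_nat (cf_p alpha m)) (Z.of_nat (cf_p alpha (S m)))). lia.
    - apply (Bezout_intro _ _ _ (Z.of_nat (cf_p alpha m)) (- Z.of_nat (cf_p alpha (S m)))). lia. }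
  rewrite Z.mul_comm in H. apply Gauss in H; auto.
  apply Z.divide_pos_le in H; lia.
Qed.

Theorem lemma4p2 (alpha : R) (Hpos : 0 < alpha) (Hlt1 : alpha < 1)
    (Hirr : irrational alpha) :
  (forall (n t : nat), (1 <= t)%nat -> (t < cf_q alpha n)%nat ->
      s_nt alpha n t = s_nt alpha n (cf_q alpha n - t)
   /\ h_nt alpha n t = h_nt alpha n (cf_q alpha n - t)
   /\ xi alpha n t = - xi alpha n (cf_q alpha n - t))
  /\
  (exists N : nat, forall n : nat, (N <= n)%nat ->
     forall t : nat, (1 <= t)%nat -> (t < cf_q alpha n)%nat ->
       s_nt alpha n t > s_nt alpha n 0).
Proof.
  split.
  - intros n t H1 H2. destruct n as [|m]; [simpl in H2; lia|].
    set (Q := cf_q alpha (S m)) in *.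
    assert (HX : xi alpha (S m) t = - xi alpha (S m) (Q - t)).
    { rewrite !xi_val by lia. fold Q.
      rewrite Nat2Z.inj_sub by lia.
      replace ((Z.of_nat Q - Z.of_nat t) * Z.of_nat (cf_q alpha m))%Z
        with (- (Z.of_nat t * Z.of_nat (cf_q alpha m)) + Z.of_nat (cf_q alpha m) * Z.of_nat Q)%Z by ring.
      rewrite Z.mod_add by lia.
      rewrite Z.mod_opp_l_nz by (try lia; apply (mod_nz alpha Hpos Hlt1 Hirr); auto).
      rewrite minus_IZR, INR_IZR_INZ.
      assert (0 < IZR (Z.of_nat Q)) by (apply IZR_lt; lia).
      field. lra. }
    assert (HQ : 0 < INR Q) by (apply lt_0_INR; lia).
    split; [|split; auto].
    + unfold s_nt. fold Q. rewrite HX, minus_INR by lia.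
      set (L := Rabs (Lambda alpha (S m))). set (y := xi alpha (S m) (Q - t)).
      replace (PI * (INR t / INR Q - L * - y)) with (PI - PI * ((INR Q - INR t) / INR Q - L * y))
        by (field; lra).
      rewrite sin_PI_x. reflexivity.
    + unfold h_nt. fold Q. rewrite HX, minus_INR by lia.
      set (L := Rabs (Lambda alpha (S m))). set (y := xi alpha (S m) (Q - t)).
      replace (PI * INR t / INR Q) with (PI - PI * (INR Q - INR t) / INR Q) by (field; lra).
      replace (PI * L * - y) with (- (PI * L * y)) by ring.
      unfold cot. rewrite sin_PI_x, Rtrigo_facts.cos_pi_minus, sin_neg.
      unfold Rdiv. ring.
  - exists 0%nat. intros n _ t H1 H2.
    destruct n as [|m]; [simpl in H2; lia|].
    set (Q := cf_q alpha (S m)) in *.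
    assert (HQ : 0 < INR Q) by (apply lt_0_INR; lia).
    assert (HQ' : 0 < IZR (Z.of_nat Q)) by (rewrite <- INR_IZR_INZ; auto).
    unfold s_nt. fold Q.
    rewrite (xi_val alpha m 0) by lia. fold Q.
    rewrite Z.mul_0_l, Z.mod_0_l by lia.
    replace (PI * (INR 0 / INR Q - Rabs (Lambda alpha (S m)) * (IZR 0 / INR Q - / 2)))
      with (PI * Rabs (Lambda alpha (S m)) / 2) by (simpl; field; lra).
    apply Rmult_lt_compat_l; [lra|].
    rewrite xi_val by lia. fold Q.
    pose proof (Z.mod_pos_bound (Z.of_nat t * Z.of_nat (cf_q alpha m)) (Z.of_nat Q) ltac:(lia)) as [B1 B2].
    set (R0 := ((Z.of_nat t * Z.of_nat (cf_q alpha m)) mod Z.of_nat Q)%Z) in *.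
    assert (0 <= IZR R0) by (apply IZR_le; lia).
    assert (IZR R0 <= INR Q) by (rewrite INR_IZR_INZ; apply IZR_le; lia).
    apply sin_ineq with (q := INR Q).
    + apply (le_INR 1). lia.
    + assert (INR t + 1 <= INR Q) by (rewrite <- S_INR; apply le_INR; lia). lra.
    + apply Rabs_pos.
    + apply (lam_bound alpha Hpos Hlt1 Hirr (S m)). fold Q. lia.
    + split.
      * assert (0 <= IZR R0 / INR Q) by (apply Rmult_le_pos; [lra|left; apply Rinv_0_lt_compat; lra]). lra.
      * assert (IZR R0 / INR Q <= 1) by (apply (Rmult_le_reg_l (INR Q)); [lra|]; field_simplify; lra). lra.
Qed.
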